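(* Let $\Theta$ be a causal theory over $\mathfrak L$. For every $M\in\mathfrak M$ (identified with the set of $\mathfrak L$-sentences true in $M$) and every $p\in\mathcal L_\Box$, either $M\vdash_\Box p$ or $M\vdash_\Box\neg p$ is derivable in $\mathbf S_\Theta$.
   Context: $\mathfrak L$ is a classical propositional language; $\mathfrak M$ is the set of its models, each identified with the maximal classically consistent set of $\mathfrak L$-sentences true in it. A causal rule is $\phi\triangleright\psi$ with $\phi,\psi\in\mathfrak L$; a causal theory $\Theta$ is a set of causal rules. $\mathcal L_\Box$ is generated by $\mathfrak L$ and a unary $\Box$. The sequent calculus $\mathbf S_\Theta$ derives sequents $\Gamma\vdash_\Box\Delta$ (collections of $\mathcal L_\Box$-formulas, possibly infinite; derivations well-founded, possibly infinitely branching) via: axiom $p\vdash_\Box p$; $\perp\vdash_\Box$; $\vdash_\Box\top$; weakening and contraction on both sides; classical two-sided LK rules for $\neg,\wedge,\vee,\to$ with shared contexts; $\Box$R: if $\phi_1\triangleright\psi_1,\dots,\phi_k\triangleright\psi_k\in\Theta$ and $\psi_1,\dots,\psi_k\vdash_\Box p$ is derivable, from $\Gamma\vdash_\Box\phi_1\wedge\dots\wedge\phi_k,\Delta$ infer $\Gamma\vdash_\Box\Box p,\Delta$; $\Box$L: letting $\{S_j\}_{j\in J}$ be all finite $S_j\subseteq\Theta$ with $\{\psi:\phi\triangleright\psi\in S_j\}\vdash_\Box p$ derivable, from $\Gamma,\{\phi:\phi\triangleright\psi\in S_j\}\vdash_\Box\Delta$ for all $j\in J$ infer $\Gamma,\Box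 p\vdash_\Box\Delta$; multicut: from $\Gamma\vdash_\Box p^m,\Delta$ and $\Gamma',p^n\vdash_\Box\Delta'$ ($m,n>0$) infer $\Gamma,\Gamma'\vdash_\Box\Delta,\Delta'$. *)

(* Defs.v *)
From Stdlib Require Import List Arith.
Import ListNotations.

Inductive LF (A : Type) : Type :=
| FAtom : A -> LF A
| FBot : LF A
| FTop : LF A
| FNeg : LF A -> LF A
| FAnd : LF A -> LF A -> LF A
| FOr : LF A -> LF A -> LF A
| FImp : LF A -> LF A -> LF A.
Arguments FBot {A}. Arguments FTop {A}.

Inductive LB (A : Type) : Type :=
| BAtom : A -> LB A
| BBot : LB A
| BTop : LB A
| BNeg : LB A -> LB A
| BAnd : LB A -> LB A -> LB A
| BOr : LB A -> LB A -> LB A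
| BImp : LB A -> LB A -> LB A
| BBox : LB A -> LB A.
Arguments BBot {A}. Arguments BTop {A}.
Arguments BAtom {A}. Arguments BNeg {A}. Arguments BAnd {A}.
Arguments BOr {A}. Arguments BImp {A}. Arguments BBox {A}.
Arguments FAtom {A}. Arguments FNeg {A}. Arguments FAnd {A}.
Arguments FOr {A}. Arguments FImp {A}.

Fixpoint emb {A : Type} (f : LF A) : LB A :=
  match f with
  | FAtom a => BAtom a
  | FBot => BBot
  | FTop => BTop
  | FNeg f => BNeg (emb f)
  | FAnd f g => BAnd (emb f) (emb g)
  | FOr f g => BOr (emb f) (emb g)
  | FImp f g => BImp (emb f) (emb g)
  end.

Fixpoint evalF {A : Type} (v : A -> bool) (f : LF A) : bool :=
  match f with
  | FAtom a => v a
  | FBot => false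
  | FTop => true
  | FNeg f => negb (evalF v f)
  | FAnd f g => evalF v f && evalF v g
  | FOr f g => evalF v f || evalF v g
  | FImp f g => implb (evalF v f) (evalF v g)
  end.

Fixpoint depth {A : Type} (p : LB A) : nat :=
  match p with
  | BAtom _ | BBot | BTop => 0
  | BNeg p => depth p
  | BAnd p q | BOr p q | BImp p q => Nat.max (depth p) (depth q)
  | BBox p => S (depth p)
  end.

(* causal rules phi |> psi are pairs (phi, psi); a causal theory is a set of them *)
Definition crule (A : Type) := (LF A * LF A)%type.
Definition ctheory (A : Type) := crule A -> Prop.

(* Sequent sides are (possibly infinite) sets of L_Box formulas. *)
Definition fset (A : Type) := LB A -> Prop.
Definition empty {A : Type} : fset A := fun _ => False.
Definition single {A : Type} (p : LB A) : fset A := fun x => x = p.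
Definition union {A : Type} (X Y : fset A) : fset A := fun x => X x \/ Y x.
Definition add {A : Type} (X : fset A) (p : LB A) : fset A := union X (single p).
Definition subset {A : Type} (X Y : fset A) : Prop := forall x, X x -> Y x.

Fixpoint bigAnd {A : Type} (l : list (LF A)) : LF A :=
  match l with
  | [] => FTop
  | [f] => f
  | f :: l => FAnd f (bigAnd l)
  end.

Definition heads {A : Type} (l : list (crule A)) : fset A :=
  fun x => exists r, In r l /\ x = emb (fst r).
Definition tails {A : Type} (l : list (crule A)) : fset A :=
  fun x => exists r, In r l /\ x = emb (snd r).

(* The calculus, with box rules restricted to Box p with depth p < n and the
   side condition "psi_1,...,psi_k |- p is derivable" supplied by an oracle O. *)
Inductive DerivO {A : Type} (Th : ctheory A) (n : nat)
    (O : fset A -> LB A -> Prop) : fset A -> fset A -> Prop :=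
| d_ax : forall p, DerivO Th n O (single p) (single p)
| d_bot : DerivO Th n O (single BBot) empty
| d_top : DerivO Th n O empty (single BTop)
| d_weak : forall G D G' D', DerivO Th n O G D -> subset G G' -> subset D D' ->
    DerivO Th n O G' D'
| d_negL : forall G D p, DerivO Th n O G (add D p) -> DerivO Th n O (add G (BNeg p)) D
| d_negR : forall G D p, DerivO Th n O (add G p) D -> DerivO Th n O G (add D (BNeg p))
| d_andL : forall G D p q, DerivO Th n O (add (add G p) q) D ->
    DerivO Th n O (add G (BAnd p q)) D
| d_andR : forall G D p q, DerivO Th n O G (add D p) -> DerivO Th n O G (add D q) ->
    DerivO Th n O G (add D (BAnd p q))
| d_orL : forall G D p q, DerivO Th n O (add G p) D -> DerivO Th n O (add G q) D ->
    DerivO Th n O (add G (BOr p q)) D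
| d_orR : forall G D p q, DerivO Th n O G (add (add D p) q) ->
    DerivO Th n O G (add D (BOr p q))
| d_impL : forall G D p q, DerivO Th n O G (add D p) -> DerivO Th n O (add G q) D ->
    DerivO Th n O (add G (BImp p q)) D
| d_impR : forall G D p q, DerivO Th n O (add G p) (add D q) ->
    DerivO Th n O G (add D (BImp p q))
| d_boxR : forall G D p (l : list (crule A)),
    depth p < n -> Forall Th l -> O (tails l) p ->
    DerivO Th n O G (add D (emb (bigAnd (map fst l)))) ->
    DerivO Th n O G (add D (BBox p))
| d_boxL : forall G D p,
    depth p < n ->
    (forall l : list (crule A), Forall Th l -> O (tails l) p ->
        DerivO Th n O (union G (heads l)) D) ->
    DerivO Th n O (add G (BBox p)) D
| d_cut : forall G D G' D' p,
    DerivO Th n O G (add D p) -> DerivO Th n O (add G' p) D' ->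
    DerivO Th n O (union G G') (union D D').

(* Orc n Psi q (for depth q < n) : "Psi |- q is derivable", computed at level depth q. *)
Fixpoint Orc {A : Type} (Th : ctheory A) (n : nat) : fset A -> LB A -> Prop :=
  match n with
  | 0 => fun _ _ => False
  | S m => fun Psi q =>
      if Nat.ltb (depth q) m then Orc Th m Psi q
      else depth q = m /\ DerivO Th m (Orc Th m) Psi (single q)
  end.

Definition Derivable {A : Type} (Th : ctheory A) (G D : fset A) : Prop :=
  exists n, DerivO Th n (Orc Th n) G D.

Definition modelSet {A : Type} (v : A -> bool) : fset A :=
  fun x => exists f, x = emb f /\ evalF v f = true.

(* Main.v *)
Require Import Defs.
From Stdlib Require Import List Arith Lia Classical.
Import ListNotations.

Ltac sub := unfold subset, add, union, single, empty; intros; cbv beta in *;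
  repeat match goal with H : _ \/ _ |- _ => destruct H | H : False |- _ => destruct H end; subst; auto.

Section S.
Variable (A : Type) (Th : ctheory A) (n : nat) (O : fset A -> LB A -> Prop).
Notation D := (DerivO Th n O).

Lemma memD (G : fset A) x : G x -> D G (single x).
Proof. intro H. apply d_weak with (G := single x) (D := single x). apply d_ax. sub. sub. Qed.

Lemma contraD (G : fset A) x : G x -> G (BNeg x) -> D G empty.
Proof.
  intros H1 H2. eapply d_weak. apply d_negL with (D := empty) (G := single x) (p := x).
  eapply d_weak. apply d_ax. sub. sub. sub. sub.
Qed.

Lemma negD (G : fset A) p : D (add G p) empty -> D G (single (BNeg p)).
Proof. intro H. eapply d_weak. apply d_negR. exact H. sub. sub. Qed.
End S.

Lemma bigAnd_false {A} (v : A -> bool) fs :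
  evalF v (bigAnd fs) = false -> exists f, In f fs /\ evalF v f = false.
Proof.
  induction fs as [|f fs IH]; simpl; intro H. discriminate.
  destruct fs as [|g fs'].
  - exists f; auto.
  - simpl in H. destruct (evalF v f) eqn:E.
    + simpl in H. destruct (IH H) as [h [Hh1 Hh2]]. exists h; auto.
    + exists f; auto.
Qed.

Ltac wk H := refine (d_weak _ _ _ _ _ _ _ H _ _); sub.

Lemma key (A : Type) (Th : ctheory A) (v : A -> bool) n (p : LB A) :
  depth p < n ->
  DerivO Th n (Orc Th n) (modelSet v) (single p) \/
  DerivO Th n (Orc Th n) (add (modelSet v) p) empty.
Proof.
  induction p; simpl; intro Hd.
  - destruct (v a) eqn:E.
    + left. apply memD. exists (FAtom a). auto.
    + right. apply contraD with (x := BAtom a). sub. left. exists (FNeg (FAtom a)).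
      simpl. rewrite E. auto.
  - right. wk (d_bot Th n (Orc Th n)).
  - left. wk (d_top Th n (Orc Th n)).
  - destruct (IHp Hd) as [H|H].
    + right. apply d_negL. wk H.
    + left. apply negD. exact H.
  - destruct (IHp1 ltac:(lia)) as [H1|H1]; destruct (IHp2 ltac:(lia)) as [H2|H2].
    + left. assert (X : DerivO Th n (Orc Th n) (modelSet v) (add empty (BAnd p1 p2))).
      { apply d_andR. wk H1. wk H2. }
      wk X.
    + right. apply d_andL. wk H2.
    + right. apply d_andL. wk H1.
    + right. apply d_andL. wk H1.
  - destruct (IHp1 ltac:(lia)) as [H1|H1]; destruct (IHp2 ltac:(lia)) as [H2|H2].
    1-3: left; assert (X : DerivO Th n (Orc Th n) (modelSet v) (add empty (BOr p1 p2)))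
      by (apply d_orR; first [solve [wk H1] | solve [wk H2]]); wk X.
    + right. apply d_orL. exact H1. exact H2.
  - destruct (IHp1 ltac:(lia)) as [H1|H1]; destruct (IHp2 ltac:(lia)) as [H2|H2].
    2: right; apply d_impL; [wk H1 | exact H2].
    all: left; assert (X : DerivO Th n (Orc Th n) (modelSet v) (add empty (BImp p1 p2)))
      by (apply d_impR; first [solve [wk H2] | solve [wk H1]]); wk X.
  - destruct (classic (exists l, Forall Th l /\ Orc Th n (tails l) p /\
        evalF v (bigAnd (map fst l)) = true)) as [[l [Hl1 [Hl2 Hl3]]]|Hn].
    + left. assert (X : DerivO Th n (Orc Th n) (modelSet v) (add empty (BBox p))).
      { apply d_boxR with (l := l); try lia; auto.
        assert (Y := memD A Th n (Orc Th n) (modelSet v) (emb (bigAnd (map fst l)))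
          ltac:(exists (bigAnd (map fst l)); auto)). wk Y. }
      wk X.
    + right. apply d_boxL. lia. intros l Hl1 Hl2.
      assert (E : evalF v (bigAnd (map fst l)) = false).
      { destruct (evalF v (bigAnd (map fst l))) eqn:E; auto.
        exfalso. apply Hn. exists l; auto. }
      destruct (bigAnd_false v _ E) as [f [Hf1 Hf2]].
      apply in_map_iff in Hf1. destruct Hf1 as [r [Hr1 Hr2]].
      apply contraD with (x := emb f).
      * right. exists r. subst. auto.
      * left. exists (FNeg f). simpl. rewrite Hf2. auto.
Qed.

Theorem mainTheorem13 (A : Type) (Th : ctheory A) (v : A -> bool) (p : LB A) :
  Derivable Th (modelSet v) (single p) \/ Derivable Th (modelSet v) (single (BNeg p)).
Proof.
  destruct (key A Th v (S (depth p)) p ltac:(lia)) as [H|H].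
  - left. exists (S (depth p)). exact H.
  - right. exists (S (depth p)). apply negD. exact H.
Qed.
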